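(* For every integer $n\ge 0$ and every integer $j$ with $0\le j\le n/3$, the number $f(n,j)$ of partitions of $n$ whose parts of even index sum to $j$ equals $$\sum_{i=0}^{j} p(i)\,p(j-i),$$ where $p$ is the partition function. (This is the $(j+1)$-st term of Sloane's sequence A000712, the number of ordered pairs $(\alpha,\beta)$ of integer partitions with $|\alpha|+|\beta|=j$.) Moreover, the bound $n/3$ is best possible: for every integer $j$ with $n/3<j\le n/2$, $f(n,j)<\sum_{i=0}^{j}p(i)p(j-i)$.
   Context: A partition $\lambda$ of $n$ is written $n=a_1+a_2+\dots+a_k$ with $a_1\ge a_2\ge\dots\ge a_k\ge1$. The parts of even index are $a_2,a_4,a_6,\dots$ and the parts of odd index are $a_1,a_3,\dots$. $f(n,j)$ denotes the number of partitions of $n$ with $a_2+a_4+a_6+\dots=j$. $p(i)$ is the number of partitions of $i$, with $p(0)=1$. *)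

(* Defs.v *)
From mathcomp Require Import all_boot.
Set Implicit Arguments. Unset Strict Implicit. Unset Printing Implicit Defensive.

Definition is_partition (n : nat) (s : seq nat) : bool :=
  [&& sorted geq s, all (fun a => 0 < a) s & sumn s == n].

Fixpoint seqs_len (m k : nat) : seq (seq nat) :=
  if k is k'.+1 then
    [seq a :: t | a <- iota 1 m, t <- seqs_len m k']
  else [:: [::]].

(* A duplicate-free list containing every sequence of length <= n with
   entries in {1,...,n}; every partition of n is among them. *)
Definition candidates (n : nat) : seq (seq nat) :=
  flatten [seq seqs_len n k | k <- iota 0 n.+1].

Definition partitions (n : nat) : seq (seq nat) :=
  [seq s <- candidates n | is_partition n s].

Definition p (n : nat) : nat := size (partitions n).

(* Sum of the parts of even index a_2 + a_4 + ... (1-based indexing). *)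
Fixpoint even_index_sum (s : seq nat) : nat :=
  match s with
  | _ :: b :: t => b + even_index_sum t
  | _ => 0
  end.

Definition f (n j : nat) : nat :=
  count (fun s => even_index_sum s == j) (partitions n).

(* Main.v *)
Require Import Defs.
From mathcomp Require Import all_boot zify.

Definition part (s : seq nat) := sorted geq s && all (fun a => 0 < a) s.

Definition ocons (x : nat) (s : seq nat) := if x is 0 then s else x :: s.

Fixpoint g0 (r : nat) (d : seq nat) : seq nat :=
  match d with [::] => if r is 0 then [::] else [:: r]
  | y :: d' => r :: y :: g0 y d' end.

Fixpoint g (r : nat) (c d : seq nat) : seq nat :=
  match c with [::] => g0 r d
  | x :: c' => (x + r) :: (x + head 0 d) :: g (head 0 d) c' (behead d) end.

Fixpoint h (l : seq nat) : nat * seq nat * seq nat :=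
  match l with
  | [::] => (0, [::], [::])
  | [:: c] => (c, [::], [::])
  | c :: b :: t => let '(r', c', d') := h t in (c - b + r', ocons (b - r') c', ocons r' d')
  end.

Lemma sorted_cons a s : sorted geq (a :: s) = (head 0 s <= a) && sorted geq s.
Proof. by case: s. Qed.

Lemma part_cons a s : part (a :: s) = [&& 0 < a, head 0 s <= a & part s].
Proof. rewrite /part sorted_cons /=; by case: (0 < a); case: (head 0 s <= a); case: (sorted geq s). Qed.

Lemma part_head0 s : part s -> head 0 s = 0 -> s = [::].
Proof. case: s => //= a s; rewrite part_cons => /and3P[? _ _] E; lia. Qed.

Lemma sumn_hb d : sumn d = head 0 d + sumn (behead d).
Proof. by case: d. Qed.

Lemma g_props c : forall r d, part c -> part d -> head 0 d <= r ->
  [/\ part (g r c d), head 0 (g r c d) = head 0 c + r,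
      sumn (g r c d) = 2 * (sumn c + sumn d) + r &
      even_index_sum (g r c d) = sumn c + sumn d].
Proof.
elim: c => [|x c IH] r d Pc Pd Hr /=.
  elim: d r Pd Hr {Pc} => [|y d IHd] r Pd Hr /=.
    case: r {Hr} => [|r] /=; first by split. split => //; try lia.
  move: Pd; rewrite part_cons => /and3P[y0 hy Pd] /=.
  have [P1 H1 S1 E1] := IHd y Pd hy.
  split; [|done| |]; last first.
  - by rewrite /= E1.
  - rewrite /= S1; lia.
  rewrite part_cons /= part_cons P1 H1 /= andbT; rewrite /= in Hr; apply/and4P; split; lia.
move: Pc; rewrite part_cons => /and3P[x0 hx Pc].
have Pd' : part (behead d) by clear -Pd; move: Pd; case: d => // y d; rewrite part_cons => /and3P[].
have hd' : head 0 (behead d) <= head 0 d by clear -Pd; move: Pd; case: d => // y d; rewrite part_cons => /and3P[].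
have [P1 H1 S1 E1] := IH _ _ Pc Pd' hd'.
split => //.
- rewrite part_cons /= part_cons P1 H1 andbT; apply/and4P; split; lia.
- rewrite S1 (sumn_hb d); lia.
- rewrite /= E1 (sumn_hb d); lia.
Qed.

Lemma hg c : forall r d, part c -> part d -> head 0 d <= r -> h (g r c d) = (r, c, d).
Proof.
elim: c => [|x c IH] r d Pc Pd Hr /=.
  elim: d r Pd Hr {Pc} => [|y d IHd] r Pd Hr /=.
    by case: r {Hr}.
  move: Pd; rewrite part_cons => /and3P[y0 hy Pd].
  rewrite IHd //= subnn subnK //. by case: y y0 {Hr hy IHd}.
move: Pc; rewrite part_cons => /and3P[x0 hx Pc].
have Pd' : part (behead d) by clear -Pd; move: Pd; case: d => // y d; rewrite part_cons => /and3P[].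
have hd' : head 0 (behead d) <= head 0 d by clear -Pd; move: Pd; case: d => // y d; rewrite part_cons => /and3P[].
rewrite IH // subnDl subnK // addnK.
have -> : ocons x c = x :: c by case: x x0 {hx IH}.
have -> : ocons (head 0 d) (behead d) = d.
  clear -Pd; move: Pd; case: d => // y d; rewrite part_cons => /and3P[y0 _ _] /=; by case: y y0.
done.
Qed.

Lemma gcons R x y c d : (x = 0 -> c = [::]) -> (y = 0 -> d = [::]) -> 0 < x + y ->
  g R (ocons x c) (ocons y d) = (x + R) :: (x + y) :: g y c d.
Proof.
case: x => [|x] Hc; case: y => [|y] Hd // _.
- by rewrite Hc.
- by rewrite Hd.
Qed.

Definition Pl l := part l -> let '(r, c, d) := h l in
  [/\ part c, part d, head 0 d <= r, head 0 l = head 0 c + r & g r c d = l].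

Lemma h_props l : Pl l.
Proof.
suff : Pl l /\ forall a, Pl (a :: l) by case.
elim: l => [|b t [IH1 IH2]].
  split; first by move=> _ /=; split.
  move=> a; rewrite /Pl part_cons /= => /and3P[a0 _ _]; split => //.
  by case: a a0.
split; first exact: IH2.
move=> c; rewrite /Pl part_cons /= => /and3P[c0 hb]; rewrite part_cons => /and3P[b0 ht Pt].
move: (IH1 Pt); case: (h t) => [[r' c'] d'] [Pc Pd hd Ht Gt].
have rb : r' <= b by lia.
have Ec : b - r' = 0 -> c' = [::] by move=> E; apply: part_head0 => //; lia.
have Ed : r' = 0 -> d' = [::] by move=> E; apply: part_head0 => //; lia.
split.
- case E: (b - r') => [|x] /=; first done.
  rewrite part_cons Pc; apply/and3P; split => //; lia.
- case E: r' => [|x] /=; first done.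
  rewrite part_cons Pd; apply/and3P; split => //; lia.
- case E: r' => [|x] /=; first by rewrite Ed //.
  lia.
- case E: (b - r') => [|x] /=.
    rewrite Ec //=; lia.
  lia.
- rewrite gcons //; last lia.
  rewrite Gt; congr (_ :: _ :: _); lia.
Qed.

Lemma uniq_flat (S T : eqType) (F : S -> seq T) (key : T -> S) s :
  uniq s -> (forall i, uniq (F i)) -> (forall i x, x \in F i -> key x = i) ->
  uniq (flatten [seq F i | i <- s]).
Proof.
move=> Us UF KF; elim: s Us => [|a s IH] //= /andP[aS Us].
rewrite cat_uniq UF IH // andbT; apply/hasP => -[x /flatten_mapP[b bs xb] xa].
by move: aS; rewrite -(KF _ _ xa) (KF _ _ xb) bs.
Qed.

Lemma seqs_len_size m k s : s \in seqs_len m k -> size s = k.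
Proof.
elim: k s => [|k IH] s /=; first by rewrite inE => /eqP->.
by case/allpairsP => -[a t] [_ /IH ht ->] /=; rewrite ht.
Qed.

Lemma seqs_len_uniq m k : uniq (seqs_len m k).
Proof.
elim: k => [|k IH] //=; apply: allpairs_uniq => //; first exact: iota_uniq.
by move=> [a t] [b u] _ _ /= [-> ->].
Qed.

Lemma seqs_len_mem m s : all (fun a => 0 < a <= m) s -> s \in seqs_len m (size s).
Proof.
elim: s => [|a s IH] //= /andP[ha hs]; apply: allpairs_f; last exact: IH.
rewrite mem_iota; lia.
Qed.

Lemma cand_uniq n : uniq (candidates n).
Proof.
apply: (@uniq_flat _ _ _ size); [exact: iota_uniq|exact: seqs_len_uniq|].
exact: seqs_len_size.
Qed.

Lemma le_sumn s a : a \in s -> a <= sumn s.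
Proof. elim: s => [|b s IH] //=; rewrite inE => /orP[/eqP->|/IH]; lia. Qed.

Lemma size_le_sumn s : all (fun a => 0 < a) s -> size s <= sumn s.
Proof. elim: s => [|b s IH] //= /andP[hb /IH]; lia. Qed.

Lemma mem_partitions n s : (s \in partitions n) = is_partition n s.
Proof.
rewrite mem_filter; apply/andP/idP => [[]//|H]; split => //.
move: H => /and3P[_ Hp /eqP Hs]; apply/flatten_mapP; exists (size s).
  rewrite mem_iota; have := size_le_sumn _ Hp; by rewrite add0n ltnS -Hs.
apply: (seqs_len_mem n s); apply/allP => a ha; move/allP: Hp => /(_ a ha) ->.
by rewrite -Hs le_sumn.
Qed.

Lemma partitions_uniq n : uniq (partitions n).
Proof. exact/filter_uniq/cand_uniq. Qed.

Definition L (j : nat) : seq (seq nat * seq nat) :=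
  flatten [seq [seq (x, y) | x <- partitions i, y <- partitions (j - i)] | i <- iota 0 j.+1].

Lemma is_part n s : is_partition n s = part s && (sumn s == n).
Proof. by rewrite /is_partition /part andbA. Qed.

Lemma mem_L j cd : (cd \in L j) = [&& part cd.1, part cd.2 & sumn cd.1 + sumn cd.2 == j].
Proof.
apply/idP/idP.
  case/flatten_mapP => i; rewrite mem_iota => hi /allpairsP [[x y] [/= hx hy ->]] /=.
  move: hx hy; rewrite !mem_partitions !is_part => /andP[-> /eqP ->] /andP[-> /eqP ->].
  apply/eqP; lia.
case: cd => x y /= /and3P[px py /eqP hs]; apply/flatten_mapP; exists (sumn x).
  rewrite mem_iota; lia.
apply: allpairs_f; rewrite mem_partitions is_part ?px ?py; apply/eqP; lia.
Qed.

Lemma L_uniq j : uniq (L j).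
Proof.
apply: (@uniq_flat _ _ _ (fun cd : seq nat * seq nat => sumn cd.1)); first exact: iota_uniq.
  move=> i; apply: allpairs_uniq; try exact: partitions_uniq.
  by move=> [a b] [c d] _ _ /= [-> ->].
move=> i cd /allpairsP [[x y] [/= hx _ ->]] /=.
by move: hx; rewrite mem_partitions is_part => /andP[_ /eqP].
Qed.

Lemma size_L j : size (L j) = \sum_(0 <= i < j.+1) p i * p (j - i).
Proof.
rewrite /L size_flatten /shape -map_comp /index_iota subn0.
elim: (iota 0 j.+1) => [|a s IH]; first by rewrite big_nil.
by rewrite big_cons /= IH size_allpairs.
Qed.

Lemma size_bij (T U : eqType) (s1 : seq T) (s2 : seq U) (G : T -> U) (H : U -> T) :
  uniq s1 -> uniq s2 -> {in s1, forall x, G x \in s2} -> {in s2, forall y, H y \in s1} ->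
  {in s1, cancel G H} -> {in s2, cancel H G} -> size s1 = size s2.
Proof.
move=> U1 U2 G12 H21 GH HG; apply/eqP; rewrite eqn_leq; apply/andP; split.
  rewrite -(size_map G); apply: uniq_leq_size.
    by rewrite map_inj_in_uniq //; exact: can_in_inj GH.
  by move=> y /mapP[x hx ->]; exact: G12.
rewrite -(size_map H); apply: uniq_leq_size.
  by rewrite map_inj_in_uniq //; exact: can_in_inj HG.
by move=> y /mapP[x hx ->]; exact: H21.
Qed.

Lemma key n j : 2 * j <= n ->
  f n j = count (fun cd => head 0 cd.2 <= n - 2 * j) (L j).
Proof.
move=> hj; rewrite /f -!size_filter; symmetry.
apply: (@size_bij _ _ _ _ (fun cd => g (n - 2 * j) cd.1 cd.2)
                 (fun l => ((h l).1.2, (h l).2))).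
- exact/filter_uniq/L_uniq.
- exact/filter_uniq/partitions_uniq.
- move=> [c d]; rewrite mem_filter mem_L /= => /andP[hd /and3P[pc pd /eqP hs]].
  have [P1 _ S1 E1] := g_props _ _ _ pc pd hd.
  rewrite mem_filter mem_partitions is_part P1 S1 E1 hs; apply/andP; split => //.
  apply/eqP; lia.
- move=> l; rewrite mem_filter mem_partitions is_part => /andP[/eqP hj' /andP[pl /eqP hs]].
  have := h_props _ pl; case: (h l) => [[r c] d] [pc pd hd _ Gl] /=.
  have [_ _ S1 E1] := g_props _ _ _ pc pd hd; rewrite Gl in S1 E1.
  rewrite mem_filter mem_L /= pc pd /=; apply/andP; split; [|apply/eqP]; lia.
- move=> [c d]; rewrite mem_filter mem_L /= => /andP[hd /and3P[pc pd _]].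
  by rewrite hg.
- move=> l; rewrite mem_filter mem_partitions is_part => /andP[/eqP hj' /andP[pl /eqP hs]].
  have := h_props _ pl; case: (h l) => [[r c] d] [pc pd hd _ Gl] /=.
  have [_ _ S1 E1] := g_props _ _ _ pc pd hd; rewrite Gl in S1 E1.
  have -> : n - 2 * j = r by lia.
  exact: Gl.
Qed.

Theorem theorem1 :
  forall n : nat,
    (forall j : nat, 3 * j <= n ->
       f n j = \sum_(0 <= i < j.+1) p i * p (j - i)) /\
    (forall j : nat, n < 3 * j -> 2 * j <= n ->
       f n j < \sum_(0 <= i < j.+1) p i * p (j - i)).
Proof.
move=> n; split.
  move=> j hj; rewrite key; last lia.
  rewrite -size_L; apply/eqP; rewrite -all_count; apply/allP => -[c d].
  rewrite mem_L /= => /and3P[_ pd /eqP hs].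
  have : head 0 d <= sumn d by case: d {pd hs} => //= a d; lia.
  lia.
move=> j h1 h2; rewrite key // -size_L -(count_predC (fun cd => head 0 cd.2 <= n - 2 * j)).
rewrite -[X in X < _]addn0 ltn_add2l -has_count; apply/hasP; exists ([::], [:: j]).
  rewrite mem_L /= addn0 eqxx andbT /part /= andbT; lia.
rewrite /= -ltnNge; lia.
Qed.
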